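(* Let $b\in\mathbb{Z}^{V_+}_{\ge0}$ and $\bar x\in\mathcal{X}\cap\mathbb{Z}^E$. Then $$\operatorname{conv}\big(\Pi(\bar x)\cap[\mathbf 0,b]^N\big)=\bigcap_{R\in\mathcal{R}(\bar x)}\operatorname{conv}\big(\Pi(R)\cap[\mathbf 0,b]^N\big).$$
   Context: $G=(V,E)$ complete undirected graph with $V=\{0\}\cup V_+$ ($0$ depot, $V_+$ customers); $D=(V,A)$ replaces each edge by two opposite arcs. Capacity $C>0$; scenarios $\xi\in[N]$ with demands $d^\xi\in\mathbb{Q}^{V_+}_{\ge0}$, $d^\xi(v)\le C$, and probabilities $p_\xi\ge0$ summing to $1$; $\bar d=\sum_\xi p_\xi d^\xi$. $f(S)=\sum_{i\in S}f(i)$; $\delta(S)$: edges with exactly one end in $S$; $E(S)$: edges with both ends in $S$. $\mathcal{X}$ is one of $\mathcal{X}_{\mathrm{sub}}=\{x\in[0,2]^E: x(\delta(v))=2\ \forall v\in V_+,\ x(E(S))\le|S|-1\ \forall\emptyset\ne S\subseteq V_+\}$ or $\mathcal{X}_{\mathrm{cvrp}}=\mathcal{X}_{\mathrm{sub}}\cap\{x:x(\delta(0))=2k,\ x(E(S))\le|S|-\lceil\bar d(S)/C\rceil\}$. A route $R=(v_1,\dots,v_\ell)$ is the cycle $0,v_1,\dots,v_\ell,0$ through distinct customers, $v_0=v_{\ell+1}=0$. Each $x\in\mathcal{X}\cap\mathbb{Z}^E$ encodes a collection of routes $\mathcal{R}(x)$ whose customer sets partition $V_+$. For a route $R$ and $\xi$,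 $\mathcal{Y}^\xi(R)$ is the set of $y^\xi\in\mathbb{Z}^{V_+}_{\ge0}$ for which there exist $f\in\mathbb{R}^A_{\ge0}$, $g\in\mathbb{R}^{V_+}_{\ge0}$ with $f_{(v_{i-1},v_i)}+d^\xi(v_i)=f_{(v_i,v_{i+1})}+g_{v_i}$ ($i\in[\ell]$), $f_{(v_{i-1},v_i)}\le C$ ($i\in[\ell+1]$), $g_{v_i}\le Cy^\xi_{v_i}$ ($i\in[\ell]$). $\Pi(R)=\mathcal{Y}^1(R)\times\cdots\times\mathcal{Y}^N(R)\subseteq\mathbb{Z}^{[N]\times V_+}$, $\Pi(x)=\bigcap_{R\in\mathcal{R}(x)}\Pi(R)$. $[\mathbf 0,b]^N=\{y:0\le y^\xi_v\le b_v\}$. *)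

(* Defs.v *)
From HB Require Import structures.
From mathcomp Require Import all_boot all_order all_algebra.
From mathcomp Require Import reals.
Set Implicit Arguments. Unset Strict Implicit. Unset Printing Implicit Defensive.
Import Order.TTheory GRing.Theory Num.Theory.
Local Open Scope ring_scope.

(* Customers V_+ = 'I_n ; vertices V = option 'I_n with None = depot 0.
   Edges of the complete graph G = 2-element subsets of V.
   Scenarios [N] = 'I_N. *)

Definition is_edge n (e : {set option 'I_n}) : bool := #|e| == 2%N.

Definition cust_set n (S : {set 'I_n}) : {set option 'I_n} := Some @: S.

Definition x_delta n (x : {set option 'I_n} -> int) (S : {set option 'I_n}) : int :=
  \sum_(e | is_edge e && (#|e :&: S| == 1%N)) x e.
Definition x_inside n (x : {set option 'I_n} -> int) (S : {set option 'I_n}) : int :=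
  \sum_(e | is_edge e && (e \subset S)) x e.

Definition in_Xsub n (x : {set option 'I_n} -> int) : Prop :=
  [/\ (forall e, is_edge e -> 0 <= x e <= 2),
      (forall v : 'I_n, x_delta x [set Some v] = 2) &
      (forall S : {set 'I_n}, S != set0 -> x_inside x (cust_set S) <= #|S|%:Z - 1)].

Definition dbar N n (p : 'I_N -> rat) (d : 'I_N -> 'I_n -> rat) (v : 'I_n) : rat :=
  \sum_(xi < N) p xi * d xi v.

Definition in_Xcvrp N n (C : rat) (p : 'I_N -> rat) (d : 'I_N -> 'I_n -> rat) (k : nat)
    (x : {set option 'I_n} -> int) : Prop :=
  [/\ in_Xsub x,
      x_delta x [set None] = 2 * k%:Z &
      (forall S : {set 'I_n}, S != set0 ->
         x_inside x (cust_set S) <= #|S|%:Z - Num.ceil ((\sum_(v in S) dbar p d v) / C))].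

(* A route R = (v_1,...,v_l) is the cycle 0,v_1,...,v_l,0.
   route_vs r = [:: v_0 = 0; v_1; ...; v_l; v_{l+1} = 0]. *)
Definition route_vs n (r : seq 'I_n) : seq (option 'I_n) :=
  rcons (None :: map Some r) None.

Definition route_edges n (r : seq 'I_n) : seq {set option 'I_n} :=
  pairmap (fun a b => [set a; b]) None (rcons (map Some r) None).

(* rs is the collection of routes R(x) encoded by the integer vector x:
   routes are nonempty sequences of distinct customers, their customer sets
   partition V_+, and x_e is the number of times the cycles traverse e. *)
Definition routes_of n (x : {set option 'I_n} -> int) (rs : seq (seq 'I_n)) : Prop :=
  [/\ (forall r, r \in rs -> r != [::] /\ uniq r),
      (forall v : 'I_n, (\sum_(r <- rs) count_mem v r)%N = 1%N) &
      (forall e, is_edge e -> x e = (\sum_(r <- rs) count_mem e (route_edges r))%:Z)].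

Definition in_Y (R : realType) n (C : rat) (dxi : 'I_n -> rat) (r : seq 'I_n)
    (y : 'I_n -> int) : Prop :=
  (forall v, 0 <= y v) /\
  exists (f : option 'I_n -> option 'I_n -> R) (g : 'I_n -> R),
    [/\ (forall a b, 0 <= f a b),
        (forall v, 0 <= g v),
        (forall i : 'I_(size r),
           let c := tnth (in_tuple r) i in
           f (nth None (route_vs r) i) (Some c) + ratr (dxi c)
           = f (Some c) (nth None (route_vs r) i.+2) + g c),
        (forall i : nat, (i < (size r).+1)%N ->
           f (nth None (route_vs r) i) (nth None (route_vs r) i.+1) <= ratr C) &
        (forall i : 'I_(size r),
           let c := tnth (in_tuple r) i in g c <= ratr C * (y c)%:~R)].

Definition in_PiR (R : realType) N n (C : rat) (d : 'I_N -> 'I_n -> rat) (r : seq 'I_n)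
    (y : 'I_N -> 'I_n -> int) : Prop :=
  forall xi : 'I_N, in_Y R C (d xi) r (y xi).

Definition in_Pix (R : realType) N n (C : rat) (d : 'I_N -> 'I_n -> rat)
    (rs : seq (seq 'I_n)) (y : 'I_N -> 'I_n -> int) : Prop :=
  forall r, r \in rs -> in_PiR R C d r y.

Definition in_box N n (b : 'I_n -> int) (y : 'I_N -> 'I_n -> int) : Prop :=
  forall (xi : 'I_N) (v : 'I_n), 0 <= y xi v <= b v.

Definition conv (R : realType) N n (S : ('I_N -> 'I_n -> int) -> Prop)
    (z : 'I_N -> 'I_n -> R) : Prop :=
  exists (m : nat) (pts : 'I_m -> 'I_N -> 'I_n -> int) (lam : 'I_m -> R),
    [/\ (forall i, S (pts i)),
        (forall i, 0 <= lam i),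
        \sum_(i < m) lam i = 1 &
        (forall xi v, z xi v = \sum_(i < m) lam i * (pts i xi v)%:~R)].

(* Main.v *)
Require Import Defs.
From HB Require Import structures.
From mathcomp Require Import all_boot all_order all_algebra.
From mathcomp Require Import reals.
From mathcomp Require Import zify.
Import Order.TTheory GRing.Theory Num.Theory.
Local Open Scope ring_scope.

Lemma conv_fin (R : realType) N n (S : ('I_N -> 'I_n -> int) -> Prop) z
  (T : finType) (pts : T -> 'I_N -> 'I_n -> int) (lam : T -> R) :
  (forall i, S (pts i)) -> (forall i, 0 <= lam i) -> \sum_i lam i = 1 ->
  (forall xi v, z xi v = \sum_i lam i * (pts i xi v)%:~R) -> conv S z.
Proof.
move=> HS HL Hs Hz.
exists #|T|, (fun k => pts (enum_val k)), (fun k => lam (enum_val k)); split.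
- by move=> i; apply: HS.
- by move=> i; apply: HL.
- by rewrite -Hs (reindex (@enum_val T predT)) //; apply: onW_bij; apply: enum_val_bij.
- move=> xi v; rewrite Hz (reindex (@enum_val T predT)) //.
  by apply: onW_bij; apply: enum_val_bij.
Qed.

Lemma conv_mono (R : realType) N n (S S' : ('I_N -> 'I_n -> int) -> Prop) z :
  (forall y, S y -> S' y) -> conv S z -> @conv R N n S' z.
Proof.
move=> H [m [pts [lam [P1 P2 P3 P4]]]].
by exists m, pts, lam; split=> // i; apply: H.
Qed.

Lemma glue (R : realType) N n (A : pred 'I_n) (b : 'I_n -> int)
  (S1 S2 : ('I_N -> 'I_n -> int) -> Prop) z :
  (forall y, S1 y -> in_box b y) -> (forall y, S2 y -> in_box b y) ->
  (forall y y', S1 y -> in_box b y' -> (forall xi v, A v -> y' xi v = y xi v) -> S1 y') ->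
  (forall y y', S2 y -> in_box b y' -> (forall xi v, ~~ A v -> y' xi v = y xi v) -> S2 y') ->
  conv S1 z -> @conv R N n S2 z -> conv (fun y => S1 y /\ S2 y) z.
Proof.
move=> B1 B2 D1 D2 [m1 [p1 [l1 [P1 L1 s1 Z1]]]] [m2 [p2 [l2 [P2 L2 s2 Z2]]]].
pose w (ij : 'I_m1 * 'I_m2) xi v := if A v then p1 ij.1 xi v else p2 ij.2 xi v.
apply: (@conv_fin R N n _ z _ w (fun ij => l1 ij.1 * l2 ij.2)).
- move=> [i j]; split.
  + apply: (D1 (p1 i)) => //.
    * move=> xi v; rewrite /w /=; case: (A v); [exact: B1 | exact: B2].
    * by move=> xi v Av; rewrite /w Av.
  + apply: (D2 (p2 j)) => //.
    * move=> xi v; rewrite /w /=; case: (A v); [exact: B1 | exact: B2].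
    * by move=> xi v Av; rewrite /w (negbTE Av).
- by move=> [i j]; apply: mulr_ge0.
- rewrite -(pair_bigA _ (fun i j => l1 i * l2 j)) /=.
  under eq_bigr do rewrite -mulr_sumr s2 mulr1.
  exact: s1.
- move=> xi v; rewrite -(pair_bigA _ (fun i j => l1 i * l2 j * (w (i, j) xi v)%:~R)) /= /w /=.
  case: (A v).
  + rewrite Z1; apply: eq_bigr => i _.
    under eq_bigr do rewrite mulrAC.
    by rewrite -mulr_sumr s2 mulr1.
  + rewrite Z2 exchange_big /=; apply: eq_bigr => j _.
    under eq_bigr do rewrite [l1 _ * _]mulrC -mulrA.
    by rewrite -mulr_sumr -mulr_suml s1 mul1r.
Qed.

Lemma inY_dep (R : realType) n C dxi (r : seq 'I_n) (y y' : 'I_n -> int) :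
  in_Y R C dxi r y -> (forall v, 0 <= y' v) -> (forall v, v \in r -> y' v = y v) ->
  in_Y R C dxi r y'.
Proof.
move=> [_ [f [g [H1 H2 H3 H4 H5]]]] hy' hag; split=> //; exists f, g; split=> // i /=.
by rewrite hag ?mem_tnth //; exact: (H5 i).
Qed.

Lemma main_ind (R : realType) N n C d (b : 'I_n -> int) (rs : seq (seq 'I_n)) z :
  (forall v, (\sum_(r <- rs) count_mem v r <= 1)%N) -> conv (in_box b) z ->
  (forall r, r \in rs -> conv (fun y => in_PiR R C d r y /\ in_box b y) z) ->
  @conv R N n (fun y => in_Pix R C d rs y /\ in_box b y) z.
Proof.
elim: rs => [|r rs IH] hcnt hbox hr.
  by apply: conv_mono hbox => y hy; split=> // r; rewrite in_nil.
have hcnt' : forall v, (\sum_(r <- rs) count_mem v r <= 1)%N.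
  by move=> v; apply: leq_trans (hcnt v); rewrite big_cons leq_addl.
have := @glue R N n (fun v => v \in r) b (fun y => in_PiR R C d r y /\ in_box b y)
  (fun y => in_Pix R C d rs y /\ in_box b y) z.
move=> G; apply: conv_mono (G _ _ _ _ _ _).
- move=> y [[hP hB] [hP' _]]; split=> // r'; rewrite in_cons => /orP[/eqP-> | ].
    exact: hP.
  exact: hP'.
- by move=> y [].
- by move=> y [].
- move=> y y' [hP hB] hB' ag; split=> // xi; apply: inY_dep (hP xi) _ _.
    by move=> v; case/andP: (hB' xi v).
  by move=> v vr; apply: ag.
- move=> y y' [hP hB] hB' ag; split=> // r' r'in xi; apply: inY_dep (hP r' r'in xi) _ _.
    by move=> v; case/andP: (hB' xi v).
  move=> v vr'; apply: ag; apply/count_memPn.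
  have := hcnt v; rewrite big_cons (big_rem r' r'in) /=.
  have : (0 < count_mem v r')%N by rewrite -has_count has_pred1.
  move: (count_mem v r) (count_mem v r') (\sum_(y0 <- rem r' rs) count_mem v y0) => a1 a2 a3.
  lia.
- by apply: hr; rewrite mem_head.
- apply: IH => // r' r'in; apply: hr; by rewrite in_cons r'in orbT.
Qed.

Theorem lemma7 (R : realType) (n N : nat) (C : rat) (p : 'I_N -> rat)
    (d : 'I_N -> 'I_n -> rat) (k : nat)
    (hC : 0 < C) (hp : forall xi, 0 <= p xi) (hp1 : \sum_(xi < N) p xi = 1)
    (hd : forall xi v, 0 <= d xi v <= C)
    (b : 'I_n -> int) (hb : forall v, 0 <= b v)
    (x : {set option 'I_n} -> int) (hX : in_Xsub x \/ in_Xcvrp C p d k x)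
    (rs : seq (seq 'I_n)) (hrs : routes_of x rs)
    (z : 'I_N -> 'I_n -> R) :
  conv (fun y => in_Pix R C d rs y /\ in_box b y) z <->
  (forall r, r \in rs -> conv (fun y => in_PiR R C d r y /\ in_box b y) z).
Proof.
split.
  move=> hc r hr; apply: conv_mono hc => y [hP hB]; split=> //; exact: hP r hr.
move=> H; case: hrs => _ hsum _.
apply: main_ind => //.
  by move=> v; rewrite hsum.
case E: rs => [|r rs'].
  exists 1%N, (fun _ _ _ => 0), (fun _ => 1); split=> //.
  - by move=> i xi v; rewrite lexx hb.
  - by rewrite big_ord1.
  - by move=> xi v; have := hsum v; rewrite E big_nil.
apply: conv_mono (H r _); first by move=> y [].
by rewrite E mem_head.
Qed.
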